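(* Let $\sigma\subset\mathbb{R}^m$ be an $m$-simplex and $F\colon\sigma\to\mathbb{R}^m$ a $\xi$-distortion map that fixes each vertex of $\sigma$, with $\xi\le1$. Then for every $x\in\sigma$, $$\|x-F(x)\|\le\frac{3\xi L}{t},$$ where $L=L(\sigma)$ and $t=t(\sigma)$.
   Context: $F$ is a $\xi$-distortion map if $\bigl|\|F(x)-F(y)\|-\|x-y\|\bigr|\le\xi\|x-y\|$ for all $x,y$ in the domain. For an $m$-simplex $\sigma$ ($m\ge1$), $L(\sigma)$ is the length of its longest edge, $a(\sigma)$ is its smallest altitude (distance from a vertex to the affine hull of the opposite facet), and its thickness is $t(\sigma)=a(\sigma)/(mL(\sigma))$. *)

(* Defs.v *)
From HB Require Import structures.
From mathcomp Require Import all_boot all_order all_algebra.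
Set Implicit Arguments. Unset Strict Implicit. Unset Printing Implicit Defensive.
Import Order.TTheory GRing.Theory Num.Theory.
Local Open Scope ring_scope.

Definition enorm (R : rcfType) (m : nat) (x : 'rV[R]_m) : R :=
  Num.sqrt (\sum_(k < m) x ord0 k ^+ 2).

(* An m-simplex is given by its m+1 vertices v : 'I_m.+1 -> R^m,
   which must be affinely independent. *)
Definition aff_indep (R : rcfType) (m : nat) (v : 'I_m.+1 -> 'rV[R]_m) : Prop :=
  forall w : 'I_m.+1 -> R,
    \sum_i w i = 0 -> \sum_i w i *: v i = 0 -> forall i, w i = 0.

Definition in_simplex (R : rcfType) (m : nat) (v : 'I_m.+1 -> 'rV[R]_m)
  (x : 'rV[R]_m) : Prop :=
  exists w : 'I_m.+1 -> R,
    [/\ forall i, 0 <= w i, \sum_i w i = 1 & x = \sum_i w i *: v i].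

Definition in_opp_facet_hull (R : rcfType) (m : nat) (v : 'I_m.+1 -> 'rV[R]_m)
  (i : 'I_m.+1) (p : 'rV[R]_m) : Prop :=
  exists w : 'I_m.+1 -> R,
    [/\ w i = 0, \sum_j w j = 1 & p = \sum_j w j *: v j].

Definition is_altitude (R : rcfType) (m : nat) (v : 'I_m.+1 -> 'rV[R]_m)
  (i : 'I_m.+1) (d : R) : Prop :=
  (forall p, in_opp_facet_hull v i p -> d <= enorm (v i - p)) /\
  (forall e, d < e -> exists p, in_opp_facet_hull v i p /\ enorm (v i - p) < e).

Definition is_min_altitude (R : rcfType) (m : nat) (v : 'I_m.+1 -> 'rV[R]_m)
  (a : R) : Prop :=
  (exists i, is_altitude v i a) /\ (forall i d, is_altitude v i d -> a <= d).

Definition longest_edge (R : rcfType) (m : nat) (v : 'I_m.+1 -> 'rV[R]_m) : R :=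
  \big[Num.max/0]_(i < m.+1) \big[Num.max/0]_(j < m.+1) enorm (v i - v j).

Definition thickness (R : rcfType) (m : nat) (v : 'I_m.+1 -> 'rV[R]_m) (a : R) : R :=
  a / (m%:R * longest_edge v).

Definition distortion_on (R : rcfType) (m : nat) (v : 'I_m.+1 -> 'rV[R]_m)
  (F : 'rV[R]_m -> 'rV[R]_m) (xi : R) : Prop :=
  forall x y, in_simplex v x -> in_simplex v y ->
    `| enorm (F x - F y) - enorm (x - y) | <= xi * enorm (x - y).

(* Main.v *)
Require Import Defs.
From HB Require Import structures.
From mathcomp Require Import all_boot all_order all_algebra.
From mathcomp Require Import ring lra.
Import Order.TTheory GRing.Theory Num.Theory.
Local Open Scope ring_scope.
Set Implicit Arguments. Unset Strict Implicit. Unset Printing Implicit Defensive.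

Section Dot.
Variables (R : rcfType) (m : nat).
Implicit Types u w z : 'rV[R]_m.

Definition dot u w : R := \sum_(k < m) u ord0 k * w ord0 k.

Lemma dotC u w : dot u w = dot w u.
Proof. by apply: eq_bigr => k _; rewrite mulrC. Qed.

Lemma dotDl u w z : dot (u + w) z = dot u z + dot w z.
Proof. by rewrite /dot -big_split; apply: eq_bigr => k _; rewrite !mxE mulrDl. Qed.

Lemma dotZl a u z : dot (a *: u) z = a * dot u z.
Proof. by rewrite /dot mulr_sumr; apply: eq_bigr => k _; rewrite !mxE mulrA. Qed.

Lemma dotNl u z : dot (- u) z = - dot u z.
Proof. by rewrite -scaleN1r dotZl mulN1r. Qed.

Lemma dotBl u w z : dot (u - w) z = dot u z - dot w z.
Proof. by rewrite dotDl dotNl. Qed.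

Lemma dotDr u w z : dot z (u + w) = dot z u + dot z w.
Proof. by rewrite dotC dotDl !(dotC z). Qed.
Lemma dotZr a u z : dot z (a *: u) = a * dot z u.
Proof. by rewrite dotC dotZl dotC. Qed.
Lemma dotBr u w z : dot z (u - w) = dot z u - dot z w.
Proof. by rewrite dotC dotBl !(dotC z). Qed.
Lemma dot0l z : dot 0 z = 0.
Proof. by rewrite -(scale0r 0) dotZl mul0r. Qed.
Lemma dot0r z : dot z 0 = 0.
Proof. by rewrite dotC dot0l. Qed.

Lemma dot_sumr (I : finType) (f : I -> 'rV[R]_m) z :
  dot z (\sum_i f i) = \sum_i dot z (f i).
Proof.
rewrite /dot (exchange_big) /=; apply: eq_bigr => k _.
by rewrite summxE mulr_sumr.
Qed.

Lemma dot_ge0 u : 0 <= dot u u.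
Proof. by apply: sumr_ge0 => k _; rewrite -expr2 sqr_ge0. Qed.

Lemma dot_eq0 u : dot u u = 0 -> u = 0.
Proof.
move=> h; apply/rowP => k; rewrite mxE.
have hp : forall i : 'I_m, predT i -> 0 <= u ord0 i * u ord0 i.
  by move=> i _; rewrite -expr2 sqr_ge0.
have /eqP := psumr_eq0P hp h (isT : predT k).
by rewrite mulf_eq0 orbb => /eqP.
Qed.

Lemma enormE u : enorm u = Num.sqrt (dot u u).
Proof. by rewrite /enorm /dot; congr Num.sqrt; apply: eq_bigr => k _; rewrite expr2. Qed.

Lemma enorm_ge0 u : 0 <= enorm u.
Proof. exact: sqrtr_ge0. Qed.

Lemma enorm_sq u : enorm u ^+ 2 = dot u u.
Proof. by rewrite enormE sqr_sqrtr // dot_ge0. Qed.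

Lemma enormN u : enorm (- u) = enorm u.
Proof. by rewrite !enormE dotNl dotC dotNl opprK. Qed.

Lemma enormZ a u : enorm (a *: u) = `|a| * enorm u.
Proof.
by rewrite !enormE dotZl dotZr mulrA -expr2 sqrtrM ?sqr_ge0 // sqrtr_sqr.
Qed.

Lemma CS u w : `|dot u w| <= enorm u * enorm w.
Proof.
set A := dot u u; set B := dot w w; set C := dot u w.
have hC : C ^+ 2 <= A * B.
  have [B0|Bpos] := eqVneq B 0.
    have w0 : w = 0 by apply: dot_eq0.
    by rewrite /C w0 dot0r expr0n /= mulr_ge0 ?dot_ge0.
  have Bg : 0 < B by rewrite lt_def Bpos dot_ge0.
  have := dot_ge0 (B *: u - C *: w).
  rewrite !dotBl !dotBr !dotZl !dotZr -/A -/B (dotC w u) -/C => h.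
  have : 0 <= B * (A * B - C ^+ 2) by move: h; congr (_ <= _); ring.
  by rewrite pmulr_rge0 // subr_ge0.
rewrite !enormE -sqrtrM ?dot_ge0 // -sqrtr_sqr.
by rewrite ler_sqrt ?mulr_ge0 ?dot_ge0.
Qed.

Lemma enorm_eq0 u : enorm u = 0 -> u = 0.
Proof. by move=> h; apply: dot_eq0; rewrite -enorm_sq h expr0n. Qed.

End Dot.

Section Bary.
Variables (R : rcfType) (m : nat) (v : 'I_m.+1 -> 'rV[R]_m).
Hypothesis hv : aff_indep v.

Definition Mv : 'M[R]_(m.+1, m + 1) := \matrix_(i < m.+1) row_mx (v i) (1%:M : 'M_1).


Lemma sum_delta (j : 'I_m.+1) (f : 'I_m.+1 -> 'rV[R]_m) :
  \sum_i ((i == j)%:R : R) *: f i = f j.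
Proof.
rewrite (bigD1 j) //= eqxx scale1r big1 ?addr0 // => i /negbTE ->.
by rewrite scale0r.
Qed.

Lemma sum_delta1 (j : 'I_m.+1) : \sum_i ((i == j)%:R : R) = 1.
Proof.
rewrite (bigD1 j) //= eqxx big1 ?addr0 // => i /negbTE ->. by [].
Qed.

Lemma Mv_mul (w : 'rV_(m.+1)) :
  w *m Mv = row_mx (\sum_i w 0 i *: v i) (\sum_i w 0 i)%:M.
Proof.
rewrite mulmx_sum_row -[LHS]hsubmxK; congr row_mx.
  rewrite linear_sum; apply: eq_bigr => i _.
  by rewrite linearZ /= rowK row_mxKl.
rewrite linear_sum raddf_sum; apply: eq_bigr => i _.
by rewrite linearZ /= rowK row_mxKr scalemx1.
Qed.

Lemma scalar_inj (a b : R) : (a%:M : 'M[R]_1) = (b%:M : 'M[R]_1) -> a = b.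
Proof. by move/(congr1 (fun M : 'M_1 => M 0 0)); rewrite !mxE eqxx !mulr1n. Qed.

Lemma Mv_inj (w : 'rV[R]_(m.+1)) : w *m Mv = 0 -> w = 0.
Proof.
rewrite Mv_mul => /eqP; rewrite row_mx_eq0 => /andP[/eqP h1 /eqP h2].
have h2' : \sum_i w 0 i = 0 by apply: scalar_inj; rewrite h2 -scalemx1 scale0r.
have := @hv (fun i => w 0 i) h2' h1.
by move=> h; apply/rowP => i; rewrite h mxE.
Qed.

Lemma Mv_uniq (w w' : 'rV[R]_(m.+1)) : w *m Mv = w' *m Mv -> w = w'.
Proof. by move=> h; apply/eqP; rewrite -subr_eq0; apply/eqP/Mv_inj; rewrite mulmxBl h subrr. Qed.

Lemma Mv_full : row_full Mv.
Proof.
have : row_free Mv.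
  rewrite -kermx_eq0; apply/eqP/row_matrixP => i; rewrite row0.
  by apply: Mv_inj; rewrite -row_mul mulmx_ker row0.
by rewrite /row_free /row_full => /eqP ->; rewrite addn1.
Qed.

Definition Q := pinvmx Mv.
Lemma QK (r : 'rV_(m + 1)) : r *m Q *m Mv = r.
Proof. by apply: mulmxKpV; apply: submx_full; apply: Mv_full. Qed.

Definition cc (u : 'rV[R]_m) : 'rV_(m.+1) := row_mx u (0 : 'M_1) *m Q.
Definition lam (p : 'rV[R]_m) : 'rV_(m.+1) := row_mx p (1%:M : 'M_1) *m Q.
Definition g (k : 'I_m.+1) : 'rV[R]_m := \row_l Q (lshift 1 l) k.

Lemma cc_mul u : cc u *m Mv = row_mx u 0.
Proof. exact: QK. Qed.
Lemma lam_mul p : lam p *m Mv = row_mx p 1%:M.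
Proof. exact: QK. Qed.

Lemma dot_g u k : dot u (g k) = cc u 0 k.
Proof.
rewrite /cc !mxE big_split_ord /= [X in _ + X]big1 ?addr0.
  by apply: eq_bigr => l _; rewrite row_mxEl !mxE.
by move=> l _; rewrite row_mxEr mxE mul0r.
Qed.

Lemma cc_sum u : \sum_i cc u 0 i *: v i = u /\ \sum_i cc u 0 i = 0.
Proof.
have := cc_mul u; rewrite Mv_mul => /eq_row_mx[-> h]; split => //.
by apply: scalar_inj; rewrite h -scalemx1 scale0r.
Qed.

Lemma e_mul k : 'e_k *m Mv = row_mx (v k) 1%:M.
Proof. by rewrite -rowE rowK. Qed.

Lemma hull_dot k p : in_opp_facet_hull v k p -> dot (v k - p) (g k) = 1.
Proof.
case=> w [wk w1 ->].
set W := \row_j w j.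
have hW : W *m Mv = row_mx (\sum_j w j *: v j) 1%:M.
  by rewrite Mv_mul; congr row_mx; [apply: eq_bigr => j _; rewrite mxE | rewrite -w1; congr _%:M; apply: eq_bigr => j _; rewrite mxE].
have : cc (v k - \sum_j w j *: v j) = 'e_k - W.
  apply: Mv_uniq; rewrite cc_mul mulmxBl e_mul hW opp_row_mx add_row_mx subrr.
  by [].
by rewrite dot_g => ->; rewrite !mxE wk subr0 !eqxx.
Qed.

Lemma lam_e k : lam (v k) = 'e_k.
Proof. by apply: Mv_uniq; rewrite lam_mul e_mul. Qed.

Lemma lamB p q : lam p - lam q = cc (p - q).
Proof.
apply: Mv_uniq; rewrite cc_mul mulmxBl !lam_mul opp_row_mx add_row_mx subrr.
by [].
Qed.

Lemma lam_sum p : \sum_i lam p 0 i *: v i = p /\ \sum_i lam p 0 i = 1.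
Proof.
have := lam_mul p; rewrite Mv_mul => /eq_row_mx[-> h]; split => //.
exact: scalar_inj.
Qed.

Lemma altitude_g k : g k != 0 -> is_altitude v k (enorm (g k))^-1.
Proof.
move=> hg.
have G0 : 0 < enorm (g k).
  rewrite lt_def enorm_ge0 andbT; apply/eqP => /enorm_eq0 h; by rewrite h eqxx in hg.
have D0 : dot (g k) (g k) != 0.
  by apply/eqP => /dot_eq0 h; rewrite h eqxx in hg.
split.
  move=> p /hull_dot h.
  have := CS (v k - p) (g k); rewrite h ger0_norm // => h1.
  by rewrite -[_^-1]mul1r ler_pdivrMr.
move=> e he.
set s := (dot (g k) (g k))^-1.
exists (v k - s *: g k); split.
  exists (fun i => lam (v k - s *: g k) 0 i).
  have [h1 h2] := lam_sum (v k - s *: g k); split => //.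
  have : lam (v k - s *: g k) = lam (v k) - cc (s *: g k).
    have h := lamB (v k) (v k - s *: g k).
    by rewrite subKr in h; rewrite -h subKr.
  move=> ->; rewrite lam_e [LHS]mxE [X in _ + X]mxE -dot_g dotZl mxE !eqxx /s mulVf // subrr.
  by [].
rewrite subKr enormZ.
have -> : s = (enorm (g k) ^+ 2)^-1 by rewrite enorm_sq.
rewrite ger0_norm ?invr_ge0 ?exprn_ge0 ?enorm_ge0 //.
by rewrite expr2 invfM -mulrA mulVf ?mulr1 // gt_eqF.
Qed.

Hypothesis hm : (0 < m)%N.

Lemma other k : exists j : 'I_m.+1, j != k.
Proof. by exists (lift k (Ordinal hm)); rewrite eq_sym neq_lift. Qed.

Lemma vert_hull k j : j != k -> in_opp_facet_hull v k (v j).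
Proof.
move=> hjk; exists (fun i => (i == j)%:R); split.
- by rewrite eq_sym (negbTE hjk).
- exact: sum_delta1.
- by rewrite sum_delta.
Qed.

Lemma g_neq0 k : g k != 0.
Proof.
have [j hj] := other k.
have := hull_dot (vert_hull hj).
by apply: contra_eqN => /eqP ->; rewrite dot0r eq_sym oner_eq0.
Qed.

Lemma vert_simplex j : in_simplex v (v j).
Proof.
exists (fun i => (i == j)%:R); split.
- by move=> i; rewrite ler0n.
- exact: sum_delta1.
- by rewrite sum_delta.
Qed.

End Bary.
Unset Implicit Arguments.

Lemma le_longest (R : rcfType) (m : nat) (v : 'I_m.+1 -> 'rV[R]_m) i j :
  enorm (v i - v j) <= longest_edge v.
Proof.
rewrite /longest_edge (bigD1 i) //= le_max; apply/orP; left.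
by rewrite (bigD1 j) //= le_max lexx.
Qed.

Lemma sq_bound (R : rcfType) (xi A B L : R) :
  0 <= xi -> xi <= 1 -> 0 <= A -> 0 <= B -> B <= L ->
  `|A - B| <= xi * B -> `|A ^+ 2 - B ^+ 2| <= 3 * xi * L ^+ 2.
Proof.
move=> x0 x1 A0 B0 BL; rewrite ler_norml => /andP[h1 h2].
have hA1 : A <= (1 + xi) * B by lra.
have hA2 : (1 - xi) * B <= A by lra.
have s1 : A ^+ 2 <= ((1 + xi) * B) ^+ 2 by rewrite lerXn2r // nnegrE; nra.
have s2 : ((1 - xi) * B) ^+ 2 <= A ^+ 2 by rewrite lerXn2r // nnegrE; nra.
have s3 : B ^+ 2 <= L ^+ 2 by rewrite lerXn2r // nnegrE; lra.
have s4 : xi * B ^+ 2 <= xi * L ^+ 2 by rewrite ler_wpM2l.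
have s5 : xi ^+ 2 * B ^+ 2 <= xi * B ^+ 2.
  by rewrite ler_wpM2r ?sqr_ge0 // expr2; nra.
rewrite ler_norml; apply/andP; split; nra.
Qed.

Theorem mainTheorem4 (R : rcfType) (m : nat) (v : 'I_m.+1 -> 'rV[R]_m)
  (F : 'rV[R]_m -> 'rV[R]_m) (xi a : R) :
  (0 < m)%N ->
  aff_indep v ->
  is_min_altitude v a ->
  distortion_on v F xi ->
  (forall i, F (v i) = v i) ->
  xi <= 1 ->
  forall x, in_simplex v x ->
    enorm (x - F x) <= 3 * xi * longest_edge v / thickness v a.
Proof.
move=> hm hv [[i0 hi0] hmin] hF hFv hxi1 x xin.
have xin' := xin; case: xin' => [w [w0 w1 xE]].
set L := longest_edge v.
have hL : forall i j, enorm (v i - v j) <= L by move=> i j; apply: le_longest.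
have L0 : 0 <= L by apply: le_trans (hL i0 i0); apply: enorm_ge0.
have alt : forall k, is_altitude v k (enorm (g v k))^-1.
  by move=> k; apply: altitude_g => //; apply: g_neq0.
have Gpos : forall k, 0 < enorm (g v k).
  move=> k; rewrite lt_def enorm_ge0 andbT; apply/eqP => /enorm_eq0 h.
  by have := g_neq0 hv hm k; rewrite h eqxx.
have hale : forall k, a <= (enorm (g v k))^-1 by move=> k; apply: hmin (alt k).
have ha : 0 < a.
  have G0 := Gpos i0.
  have : (enorm (g v i0))^-1 <= a.
    case: (lerP (enorm (g v i0))^-1 a) => // h.
    have [p [hp1 hp2]] := hi0.2 _ h.
    have := (alt i0).1 p hp1.
    by rewrite leNgt hp2.
  by apply: lt_le_trans; rewrite invr_gt0.
have hag : forall k, a * enorm (g v k) <= 1.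
  move=> k; have := ler_wpM2r (ltW (Gpos k)) (hale k).
  by rewrite mulVf // gt_eqF.
have hxi0 : 0 <= xi.
  have [j hj] := other hm (ord0 : 'I_m.+1).
  have hd := hF _ _ (vert_simplex v ord0) (vert_simplex v j).
  have hpos : 0 < enorm (v ord0 - v j).
    rewrite lt_def enorm_ge0 andbT; apply/eqP => /enorm_eq0 h.
    have := hull_dot hv (vert_hull v hj); rewrite h dot0l => /eqP.
    by rewrite eq_sym oner_eq0.
  by rewrite -(pmulr_lge0 _ hpos); apply: le_trans hd.
have hB : forall k, enorm (x - v k) <= L.
  move=> k.
  set s := x - v k.
  have sE : s = \sum_j w j *: (v j - v k).
    rewrite /s xE; symmetry; under eq_bigr do rewrite scalerBr.
    by rewrite sumrB -scaler_suml w1 scale1r.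
  have h : enorm s ^+ 2 <= enorm s * L.
    rewrite enorm_sq {2}sE dot_sumr.
    apply: (@le_trans _ _ (\sum_j w j * (enorm s * L))).
      apply: ler_sum => j _; rewrite dotZr ler_wpM2l //.
      apply: le_trans (ler_norm _) _; apply: le_trans (CS _ _) _.
      by rewrite ler_wpM2l ?enorm_ge0.
    by rewrite -mulr_suml w1 mul1r.
  have := enorm_ge0 s; nra.
set u := F x - x.
set N := enorm u.
have hk : forall k, `|dot u (v k - x) - dot u u / 2| <= 3 * xi * L ^+ 2 / 2.
  move=> k.
  have hd := hF _ _ xin (vert_simplex v k); rewrite hFv in hd.
  have := @sq_bound R _ _ _ _ hxi0 hxi1 (enorm_ge0 _) (enorm_ge0 _) (hB k) hd.
  have eA : F x - v k = u - (v k - x) by rewrite /u opprB addrA subrK.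
  have eB : x - v k = - (v k - x) by rewrite opprB.
  rewrite eA eB enormN !enorm_sq.
  move: (v k - x) => z; clearbody u.
  rewrite !dotBl !dotBr (dotC z u).
  set D := dot u u; set E := dot u z; set Z := dot z z.
  have -> : D - E - (E - Z) - Z = - 2 * (E - D / 2) by field.
  rewrite normrM normrN normr_nat => h.
  by rewrite ler_pdivlMr //; lra.
have [csum csum0] := cc_sum hv u.
have hsum : dot u u = \sum_k cc v u 0 k * (dot u (v k - x) - dot u u / 2).
  transitivity (\sum_k cc v u 0 k * dot u (v k) - (\sum_k cc v u 0 k) * (dot u x + dot u u / 2)).
    rewrite csum0 mul0r subr0.
    have := congr1 (dot u) csum; rewrite dot_sumr => <-.
    by apply: eq_bigr => k _; rewrite dotZr.
  rewrite mulr_suml -sumrB; apply: eq_bigr => k _; rewrite dotBr; ring.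
have hc : forall k, `|cc v u 0 k| <= N / a.
  move=> k; rewrite -dot_g; apply: le_trans (CS _ _) _.
  rewrite ler_pdivlMr // -mulrA; apply: le_trans (ler_wpM2l (enorm_ge0 _) _) _.
    by rewrite mulrC; apply: hag.
  by rewrite mulr1.
set K := 3 * xi * L ^+ 2 / 2.
have hmain : N ^+ 2 <= (m%:R + 1) * (N / a * K).
  rewrite /N enorm_sq hsum.
  apply: le_trans (ler_norm _) _; apply: le_trans (ler_norm_sum _ _ _) _.
  apply: (@le_trans _ _ (\sum_(k < m.+1) (N / a * K))).
    apply: ler_sum => k _; rewrite normrM; apply: ler_pM => //.
  by rewrite sumr_const card_ord -[_ *+ m.+1]mulr_natl -natr1.
have N0 : 0 <= N by apply: enorm_ge0.
have M1 : 1 <= (m%:R : R) by rewrite ler1n.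
have K0 : 0 <= xi * L ^+ 2 by rewrite mulr_ge0 ?sqr_ge0.
have h1 : N ^+ 2 <= N * ((m%:R + 1) * K / a).
  by apply: le_trans hmain _; rewrite le_eqVlt; apply/orP; left; apply/eqP; ring.
have h2 : N <= (m%:R + 1) * K / a.
  case: (eqVneq N 0) => [->|Nn0].
    apply: divr_ge0; last exact: ltW. apply: mulr_ge0; first by rewrite addr_ge0 ?ler0n. rewrite /K; nra.
  have Np : 0 < N by rewrite lt_def Nn0.
  by move: h1; rewrite expr2 ler_pM2l.
have h3 : (m%:R + 1) * K <= 3 * xi * L * (m%:R * L).
  rewrite /K; nra.
rewrite -[x - F x]opprB enormN -/u -/N /thickness invf_div mulrA.
apply: le_trans h2 _; apply: ler_wpM2r => //; rewrite invr_ge0; exact: ltW.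
Qed.
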